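(* Let $G\subset\mathbb R^r$ be a lattice of rank $r$ and let $\mathcal D$ be a linear partial differential operator on $\mathbb R^r$ with continuous $G$-periodic (real or complex) coefficients. Let $\mathcal S$ be the space of all classical global solutions $u$ of $\mathcal Du=0$ on $\mathbb R^r$, and $\mathcal S^G$ the subspace of $G$-periodic solutions. If $\dim\mathcal S^G<\infty$, then $\dim P_n^G(\mathcal S)<\infty$ for every $n\in\mathbb Z_+$, where $$P_n^G(\mathcal S)=\Big\{p=\sum_{j_1+\dots+j_r\le n}f_{j_1,\dots,j_r}(x)\,x_1^{j_1}\cdots x_r^{j_r}\ :\ \text{all } f_{j_1,\dots,j_r}\text{ continuous and } G\text{-periodic},\ \mathcal Dp=0\Big\}.$$
   Context: A function $f$ on $\mathbb R^r$ is $G$-periodic if $f(x+g)=f(x)$ for all $g\in G$, $x\in\mathbb R^r$; $x_1,\dots,x_r$ are the standard coordinates. *)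

(* Defs.v *)
From HB Require Import structures.
From mathcomp Require Import all_boot all_order all_algebra.
From mathcomp Require Import all_classical all_reals all_analysis.
From mathcomp Require Import complex.
From Stdlib Require List.

Set Implicit Arguments.
Unset Strict Implicit.
Unset Printing Implicit Defensive.
Import Order.TTheory GRing.Theory Num.Theory.
Import numFieldNormedType.Exports.
Local Open Scope ring_scope.

Section PDO.
Variables (R : realType) (r : nat).

(* Points of R^r are row vectors; x_i = x 0 i. *)
Notation pt := 'rV[R]_r.
Notation C := (complex.complex R).

Definition unitvec (i : 'I_r) : pt := \row_(j < r) (i == j)%:R.

Definition reF (f : pt -> C) : pt -> R := fun x => complex.Re (f x).
Definition imF (f : pt -> C) : pt -> R := fun x => complex.Im (f x).

Definition cpartial (i : 'I_r) (f : pt -> C) : pt -> C :=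
  fun x => complex.Complex ('D_(unitvec i) (reF f) x) ('D_(unitvec i) (imF f) x).

Definition cderivable (i : 'I_r) (f : pt -> C) (x : pt) : Prop :=
  derivable (reF f) x (unitvec i) /\ derivable (imF f) x (unitvec i).

Definition ccontinuous (f : pt -> C) : Prop :=
  continuous (reF f) /\ continuous (imF f).

Definition cpartials (s : seq 'I_r) (f : pt -> C) : pt -> C :=
  foldr cpartial f s.

Definition isCk (m : nat) (f : pt -> C) : Prop :=
  forall s : seq 'I_r,
    (size s <= m)%N ->
    ccontinuous (cpartials s f) /\
    ((size s < m)%N -> forall (i : 'I_r) (x : pt), cderivable i (cpartials s f) x).

(* A linear partial differential operator  D u = \sum_k a_k(x) d^{s_k} u,
   given as a finite list of pairs (coefficient a_k, multi-index s_k),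
   a multi-index being written as the list of differentiation variables. *)
Definition pdo := seq ((pt -> C) * seq 'I_r).

Definition pdo_order (D : pdo) : nat := \max_(t <- D) size t.2.

Definition pdo_apply (D : pdo) (u : pt -> C) : pt -> C :=
  fun x => \sum_(t <- D) t.1 x * cpartials t.2 u x.

Definition classical_solution (D : pdo) (u : pt -> C) : Prop :=
  isCk (pdo_order D) u /\ forall x, pdo_apply D u x = 0.

(* The lattice G = Z b_1 + ... + Z b_r, where b_1..b_r are the rows of B. *)
Definition lattice_elt (B : 'M[R]_r) (k : 'rV[int]_r) : pt :=
  map_mx (fun z : int => z%:~R) k *m B.

Definition lattice_periodic {T : Type} (B : 'M[R]_r) (f : pt -> T) : Prop :=
  forall (k : 'rV[int]_r) (x : pt), f (x + lattice_elt B k) = f x.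

Definition finite_dim (S : set (pt -> C)) : Prop :=
  exists (N : nat) (b : 'I_N -> pt -> C),
    forall u, S u -> exists c : 'I_N -> C, u = fun x => \sum_(j < N) c j * b j x.

Definition sol_space (D : pdo) : set (pt -> C) := [set u | classical_solution D u].

Definition per_sol_space (B : 'M[R]_r) (D : pdo) : set (pt -> C) :=
  [set u | classical_solution D u /\ lattice_periodic B u].

Definition monomial (n : nat) (alpha : {ffun 'I_r -> 'I_n.+1}) (x : pt) : R :=
  \prod_(i < r) (x 0 i) ^+ (alpha i).

Definition mdeg (n : nat) (alpha : {ffun 'I_r -> 'I_n.+1}) : nat :=
  \sum_(i < r) (alpha i : nat).

Definition PnG (B : 'M[R]_r) (D : pdo) (n : nat) : set (pt -> C) :=
  [set p | classical_solution D p /\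
     exists f : {ffun 'I_r -> 'I_n.+1} -> pt -> C,
       (forall alpha, ccontinuous (f alpha) /\ lattice_periodic B (f alpha)) /\
       p = fun x => \sum_(alpha | (mdeg alpha <= n)%N)
                       f alpha x * complex.real_complex R (monomial alpha x)].

End PDO.

(* Main.v *)
Require Import Defs.
From HB Require Import structures.
From mathcomp Require Import all_boot all_order all_algebra.
From mathcomp Require Import all_classical all_reals all_analysis.
From mathcomp Require Import complex.
From Stdlib Require List.
From mathcomp Require Import ring zify.
Import Order.TTheory GRing.Theory Num.Theory.
Local Open Scope ring_scope.

Module Helpers.
Set Implicit Arguments. Unset Strict Implicit. Unset Printing Implicit Defensive.
Import numFieldNormedType.Exports.

Section LA.
Variables (F : fieldType) (V : lmodType F).

Definition inspan (s : seq V) (w : V) :=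
  exists c : nat -> F, w = \sum_(i < size s) c i *: s`_i.

Definition lsubspace (S : set V) :=
  S 0 /\ forall a u v, S u -> S v -> S (a *: u + v).

Lemma inspan_cons x s w : inspan (x :: s) w <->
  exists a (c : nat -> F), w = a *: x + \sum_(i < size s) c i *: s`_i.
Proof.
split.
  by case=> c ->; exists (c 0%N), (fun i => c i.+1); rewrite /= big_ord_recl.
case=> a [c ->]; exists (fun i => if i is i'.+1 then c i' else a).
by rewrite /= big_ord_recl.
Qed.

Lemma inspan_nil w : inspan [::] w -> w = 0.
Proof. by case=> c ->; rewrite big_ord0. Qed.

Lemma inspan0 s : inspan s 0.
Proof. by exists (fun _ => 0); rewrite big1 // => i _; rewrite scale0r. Qed.

Lemma inspan_lin s a u v : inspan s u -> inspan s v -> inspan s (a *: u + v).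
Proof.
case=> c -> [d ->]; exists (fun i => a * c i + d i).
rewrite scaler_sumr -big_split /=; apply: eq_bigr => i _.
by rewrite scalerA scalerDl.
Qed.

Lemma inspan_cat s t u v : inspan s u -> inspan t v -> inspan (s ++ t) (u + v).
Proof.
case=> c -> [d ->].
exists (fun i => if (i < size s)%N then c i else d (i - size s)%N).
rewrite size_cat big_split_ord /=; congr (_ + _); apply: eq_bigr => i _ /=.
  by rewrite ltn_ord nth_cat ltn_ord.
by rewrite ltnNge leq_addr /= nth_cat ltnNge leq_addr /= addKn.
Qed.

Lemma subspace_sum (S : set V) (s : seq V) (c : nat -> F) :
  lsubspace S -> (forall i, (i < size s)%N -> S s`_i) ->
  S (\sum_(i < size s) c i *: s`_i).
Proof.
move=> [S0 Slin] Hs; apply: (big_ind S) => //.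
  by move=> u v Su Sv; rewrite -[u]scale1r; apply: Slin.
by move=> i _; rewrite -[_ *: _]addr0; apply: Slin => //; apply: Hs.
Qed.

Lemma extract (b : seq V) (W : set V) : lsubspace W ->
  (forall w, W w -> inspan b w) ->
  exists p : seq V, (forall i, (i < size p)%N -> W p`_i) /\
                    (forall w, W w -> inspan p w).
Proof.
elim: b W => [|b0 bs IH] W sW Hb.
  exists [::]; split => // w /Hb /inspan_nil ->; exact: inspan0.
have [W0 Wlin] := sW.
pose W1 := (fun w => W w /\ inspan bs w).
have sW1 : lsubspace W1.
  split; first by split => //; exact: inspan0.
  by move=> a u v [Wu iu] [Wv iv]; split; [apply: Wlin | apply: inspan_lin].
have [p1 [Wp1 Hp1]] := IH W1 sW1 (fun w => @proj2 _ _).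
case: (pselect (exists w0 a (c : nat -> F), W w0 /\ a != 0 /\
          w0 = a *: b0 + \sum_(i < size bs) c i *: bs`_i)).
  move=> [w0 [a [c [Ww0 [a0 ew0]]]]].
  exists (w0 :: p1); split.
    by case=> [|i] //= /Wp1 [].
  move=> w Ww; have /inspan_cons [d [e ew]] := Hb w Ww.
  pose k := d / a.
  have W1w : W1 ((- k) *: w0 + w).
    split; first by apply: Wlin.
    exists (fun i => e i - k * c i).
    rewrite ew ew0 scalerDr scalerA addrACA.
    have -> : - k * a = - d by rewrite /k mulNr divfK.
    rewrite scaleNr addNr add0r scaler_sumr -big_split /=.
    by apply: eq_bigr => i _; rewrite scalerA scalerDl addrC mulNr.
  have [f ef] := Hp1 _ W1w.
  apply/inspan_cons; exists k, f; rewrite -ef.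
  by rewrite addrA scaleNr addrN add0r.
move=> Hno; exists p1; split; first by move=> i /Wp1 [].
move=> w Ww; apply: Hp1; split => //.
have /inspan_cons [d [e ew]] := Hb w Ww.
case: (eqVneq d 0) => [d0|dn0].
  by exists e; rewrite ew d0 scale0r add0r.
by exfalso; apply: Hno; exists w, d, e.
Qed.

Definition linmap (L : V -> V) := forall a u v, L (a *: u + v) = a *: L u + L v.

Lemma linmap0 L : linmap L -> L 0 = 0.
Proof.
move=> hL; have h := hL 1 0 0; rewrite scaler0 addr0 scale1r in h.
have : L 0 + L 0 - L 0 = L 0 - L 0 by rewrite -h.
by rewrite addrK subrr.
Qed.

Lemma linmap_sum L (s : seq V) (c : nat -> F) : linmap L ->
  L (\sum_(i < size s) c i *: s`_i) = \sum_(i < size s) c i *: L s`_i.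
Proof.
move=> hL.
have hD : {morph L : x y / x + y}.
  by move=> x y; rewrite -{1}[x]scale1r hL scale1r.
rewrite (big_morph L hD (linmap0 hL)) /=; apply: eq_bigr => i _.
by rewrite -[_ *: _]addr0 hL linmap0 // addr0.
Qed.

Lemma fd_step (S : set V) (L : V -> V) (t s0 : seq V) :
  lsubspace S -> linmap L ->
  (forall u, S u -> inspan t (L u)) ->
  (forall u, S u -> L u = 0 -> inspan s0 u) ->
  exists s, forall u, S u -> inspan s u.
Proof.
move=> sS hL Ht Hk; have [S0 Slin] := sS.
pose W := (fun w => exists u, S u /\ w = L u).
have sW : lsubspace W.
  split; first by exists 0; split => //; rewrite linmap0.
  move=> a _ _ [u [Su ->]] [v [Sv ->]]; exists (a *: u + v); split.
    exact: Slin.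
  by rewrite hL.
have [p [Wp Hp]] : exists p : seq V, (forall i, (i < size p)%N -> W p`_i) /\
                    (forall w, W w -> inspan p w).
  by apply: (extract (b:=t) sW) => w [u [Su ->]]; apply: Ht.
have [q hq] : exists q : nat -> V, forall i, (i < size p)%N -> S (q i) /\ p`_i = L (q i).
  have /choice [q hq] : forall i : nat, exists v : V,
     (i < size p)%N -> S v /\ p`_i = L v.
    move=> i; case: (boolP (i < size p)%N) => hi.
      by have [v [Sv ev]] := Wp i hi; exists v.
    by exists 0.
  by exists q.
exists (mkseq q (size p) ++ s0) => u Su.
have [c ec] : inspan p (L u) by apply: Hp; exists u.
pose v := \sum_(i < size (mkseq q (size p))) c i *: (mkseq q (size p))`_i.
have Sv : S v by apply: (subspace_sum (S:=S) (s:=mkseq q (size p)) c sS) => i; rewrite size_mkseq => hi;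
  rewrite nth_mkseq //; exact: (hq i hi).1.
have Lv : L v = L u.
  rewrite /v linmap_sum // ec; move: (size_mkseq q (size p)).
  set m := mkseq q (size p) => em.
  have -> : \sum_(i < size m) c i *: L m`_i = \sum_(i < size p) c i *: L m`_i.
    by rewrite em.
  apply: eq_bigr => i _; rewrite /m nth_mkseq //; congr (_ *: _).
  by rewrite (hq i (ltn_ord i)).2.
have -> : u = v + ((- 1) *: v + u) by rewrite scaleN1r addrA addrN add0r.
apply: inspan_cat; first by exists c.
apply: Hk; first by apply: Slin.
by rewrite hL Lv scaleN1r addNr.
Qed.

Lemma fd_steps (Ls : nat -> V -> V) (s0 : seq V) k : forall (S : set V),
  lsubspace S ->
  (forall j, (j < k)%N -> linmap (Ls j) /\
      exists t, forall u, S u -> inspan t (Ls j u)) ->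
  (forall u, S u -> (forall j, (j < k)%N -> Ls j u = 0) -> inspan s0 u) ->
  exists s, forall u, S u -> inspan s u.
Proof.
elim: k => [|k IH] S sS HL Hk.
  by exists s0 => u Su; apply: Hk.
have [S0 Slin] := sS.
pose S' := (fun u => S u /\ Ls k u = 0).
have [lk [tk Htk]] := HL k (ltnSn k).
have sS' : lsubspace S'.
  split; first by split => //; apply: linmap0.
  by move=> a u v [Su Lu] [Sv Lv]; split; [apply: Slin|rewrite lk Lu Lv scaler0 addr0].
have [s' Hs'] : exists s, forall u, S' u -> inspan s u.
  apply: IH => //.
    move=> j hj; have [lj [t Ht]] := HL j (ltnW hj).
    split => //; exists t => u [Su _]; exact: Ht.
  move=> u [Su Lu] H; apply: Hk => // j; rewrite ltnS leq_eqVlt.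
  by case/orP => [/eqP -> //|]; apply: H.
apply: (fd_step sS lk Htk) => u Su Lu; apply: Hs'; by split.
Qed.

End LA.


Section An.
Variables (R : realType) (r : nat).
Notation pt := 'rV[R]_r.
Notation C := (complex.complex R).
Notation RC := (real_complex R).

Definition lc (a : C) (u v : pt -> C) : pt -> C := fun x => a * u x + v x.

Lemma reF_lc a (u v : pt -> C) : reF (lc a u v) =
  fun x => complex.Re a * reF u x + (- complex.Im a) * imF u x + reF v x.
Proof.
apply/funext => x; rewrite /reF /imF /lc.
case: a => a1 a2; case: (u x) => b1 b2; case: (v x) => c1 c2 /=.
ring.
Qed.

Lemma imF_lc a (u v : pt -> C) : imF (lc a u v) =
  fun x => complex.Im a * reF u x + complex.Re a * imF u x + imF v x.
Proof.
apply/funext => x; rewrite /reF /imF /lc.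
case: a => a1 a2; case: (u x) => b1 b2; case: (v x) => c1 c2 /=.
ring.
Qed.

Lemma comb_fun (p q : R) (f g h : pt -> R) :
  (fun y => p * f y + q * g y + h y) = (p \*: f + q \*: g) + h.
Proof. by apply/funext. Qed.

Lemma der_comb (p q : R) (f g h : pt -> R) x v :
  derivable f x v -> derivable g x v -> derivable h x v ->
  derivable (fun y => p * f y + q * g y + h y) x v /\
  'D_v (fun y => p * f y + q * g y + h y) x = p * 'D_v f x + q * 'D_v g x + 'D_v h x.
Proof.
move=> df dg dh; rewrite comb_fun; split.
  by apply: derivableD => //; apply: derivableD; apply: derivableZ.
rewrite deriveD //; last by apply: derivableD; apply: derivableZ.
rewrite deriveD; try apply: derivableZ => //.
by rewrite !deriveZ.
Qed.

Lemma contD (f g : pt -> R) : continuous f -> continuous g -> continuous (f + g).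
Proof. move=> cf cg x. apply: continuousD. exact: cf. exact: cg. Qed.
Lemma contZ (f : pt -> R) p : continuous f -> continuous (p \*: f).
Proof. move=> cf x. apply: continuousZ. exact: cst_continuous. exact: cf. Qed.

Lemma cont_comb (p q : R) (f g h : pt -> R) :
  continuous f -> continuous g -> continuous h ->
  continuous (fun y => p * f y + q * g y + h y).
Proof.
move=> cf cg ch; rewrite comb_fun.
by apply: contD => //; apply: contD; apply: contZ.
Qed.

Lemma ccont_lc a (u v : pt -> C) : ccontinuous u -> ccontinuous v -> ccontinuous (lc a u v).
Proof.
move=> [cu1 cu2] [cv1 cv2]; split; [rewrite reF_lc | rewrite imF_lc];
  exact: cont_comb.
Qed.

Lemma cpartial_lc (i : 'I_r) a (u v : pt -> C) x : cderivable i u x -> cderivable i v x ->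
  cderivable i (lc a u v) x /\
  cpartial i (lc a u v) x = a * cpartial i u x + cpartial i v x.
Proof.
move=> [du1 du2] [dv1 dv2].
have [d1 e1] := der_comb (complex.Re a) (- complex.Im a) du1 du2 dv1.
have [d2 e2] := der_comb (complex.Im a) (complex.Re a) du1 du2 dv2.
split; first by split; [rewrite reF_lc | rewrite imF_lc].
rewrite /cpartial reF_lc imF_lc e1 e2.
clear d1 d2 e1 e2; case: a => a1 a2 /=.
congr complex.Complex; ring.
Qed.

Lemma cpartials_cons (i : 'I_r) (s : seq 'I_r) (f : pt -> C) : cpartials (i :: s) f = cpartial i (cpartials s f).
Proof. by []. Qed.

Lemma cpartials_lc m a (u v : pt -> C) (s : seq 'I_r) : isCk m u -> isCk m v -> (size s <= m)%N ->
  cpartials s (lc a u v) = lc a (cpartials s u) (cpartials s v).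
Proof.
move=> hu hv; elim: s => [|i s IH] hs; first by [].
have hs' : (size s < m)%N by move: hs; rewrite [size _]/=.
rewrite cpartials_cons IH ?(ltnW hs') //; apply/funext => x.
have d1 := (hu s (ltnW hs')).2 hs' i x.
have d2 := (hv s (ltnW hs')).2 hs' i x.
by rewrite (cpartial_lc a d1 d2).2.
Qed.

Lemma isCk_lc m a (u v : pt -> C) : isCk m u -> isCk m v -> isCk m (lc a u v).
Proof.
move=> hu hv s hs; rewrite (cpartials_lc a hu hv hs); split.
  by apply: ccont_lc; [exact: (hu s hs).1 | exact: (hv s hs).1].
move=> hs' i x; apply: (cpartial_lc a _ _).1.
  exact: (hu s hs).2.
exact: (hv s hs).2.
Qed.

End An.


Section An2.
Variables (R : realType) (r : nat).
Notation pt := 'rV[R]_r.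
Notation C := (complex.complex R).
Notation RC := (real_complex R).

Definition tr (g : pt) (u : pt -> C) : pt -> C := fun x => u (x + g).

Lemma shift_fun_eq (f : pt -> R) (g x v : pt) :
  (fun h : R => h^-1 *: (((fun y => f (y + g)) \o shift x) (h *: v) - f (x + g))) =
  (fun h : R => h^-1 *: ((f \o shift (x + g)) (h *: v) - f (x + g))).
Proof. by apply/funext => h; rewrite /comp /shift /= addrA. Qed.

Lemma derive_tr (f : pt -> R) g x v : 'D_v (fun y => f (y + g)) x = 'D_v f (x + g).
Proof. by rewrite /derive /= shift_fun_eq. Qed.

Lemma derivable_tr (f : pt -> R) g x v :
  derivable f (x + g) v -> derivable (fun y => f (y + g)) x v.
Proof. by rewrite /derivable /= shift_fun_eq. Qed.

Lemma cpartial_tr (i : 'I_r) g (u : pt -> C) : cpartial i (tr g u) = tr g (cpartial i u).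
Proof.
apply/funext => x; rewrite /cpartial /tr.
congr complex.Complex; exact: derive_tr.
Qed.

Lemma cpartials_tr (s : seq 'I_r) g (u : pt -> C) :
  cpartials s (tr g u) = tr g (cpartials s u).
Proof.
elim: s => [|i s IH]; first by [].
by rewrite !cpartials_cons IH cpartial_tr.
Qed.

Lemma cont_shift (g : pt) : continuous (fun x : pt => x + g).
Proof. move=> x; apply: (@continuousD _ _ _ id (cst g)); [by move=> A hA | exact: cst_continuous]. Qed.

Lemma ccont_tr g (u : pt -> C) : ccontinuous u -> ccontinuous (tr g u).
Proof.
move=> [c1 c2]; split => x.
  move=> A hA; exact: (@cont_shift g x _ (c1 (x + g) A hA)).
move=> A hA; exact: (@cont_shift g x _ (c2 (x + g) A hA)).
Qed.

Lemma isCk_tr m g (u : pt -> C) : isCk m u -> isCk m (tr g u).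
Proof.
move=> hu s hs; rewrite cpartials_tr; split.
  exact: (ccont_tr g (hu s hs).1).
move=> hs' i x; have [d1 d2] := (hu s hs).2 hs' i (x + g).
split.
  exact: (derivable_tr (f:=reF (cpartials s u)) (g:=g) d1).
exact: (derivable_tr (f:=imF (cpartials s u)) (g:=g) d2).
Qed.

Lemma cpartials0 (s : seq 'I_r) : cpartials s (fun _ : pt => (0 : C)) = fun _ => 0.
Proof.
elim: s => [|i s IH]; first by [].
rewrite cpartials_cons IH; apply/funext => x; rewrite /cpartial.
have -> : reF (fun _ : pt => (0 : C)) = cst 0 by apply/funext.
have -> : imF (fun _ : pt => (0 : C)) = cst 0 by apply/funext.
by rewrite !derive_cst.
Qed.

Lemma isCk0 m : isCk m (fun _ : pt => (0 : C)).
Proof.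
move=> s hs; rewrite cpartials0; split.
  by split; apply: cst_continuous.
move=> _ i x; split; exact: derivable_cst.
Qed.

Lemma pdo_order_ge (D : pdo R r) t : List.In t D -> (size t.2 <= pdo_order D)%N.
Proof.
elim: D => [|t0 D IH] //= [->|h]; rewrite /pdo_order big_cons.
  exact: leq_maxl.
exact: leq_trans (IH h) (leq_maxr _ _).
Qed.

Lemma pdo_apply_lc (D : pdo R r) a (u v : pt -> C) x :
  isCk (pdo_order D) u -> isCk (pdo_order D) v ->
  pdo_apply D (lc a u v) x = a * pdo_apply D u x + pdo_apply D v x.
Proof.
move=> hu hv; rewrite /pdo_apply.
have H : forall D' : pdo R r, (forall t, List.In t D' -> (size t.2 <= pdo_order D)%N) ->
  \sum_(t <- D') t.1 x * cpartials t.2 (lc a u v) x =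
  a * \sum_(t <- D') t.1 x * cpartials t.2 u x + \sum_(t <- D') t.1 x * cpartials t.2 v x.
  elim => [|t D' IH] H; first by rewrite !big_nil mulr0 addr0.
  rewrite !big_cons IH; last by move=> t' h; apply: H; right.
  rewrite (cpartials_lc a hu hv (H t (or_introl erefl))) /lc; ring.
by apply: H => t; apply: pdo_order_ge.
Qed.

Lemma sol_lc (D : pdo R r) a (u v : pt -> C) :
  classical_solution D u -> classical_solution D v -> classical_solution D (lc a u v).
Proof.
move=> [hu eu] [hv ev]; split; first exact: isCk_lc.
by move=> x; rewrite pdo_apply_lc // eu ev mulr0 addr0.
Qed.

Lemma sol0 (D : pdo R r) : classical_solution D (fun _ => 0).
Proof.
split; first exact: isCk0.
move=> x; rewrite /pdo_apply big1 // => t _; by rewrite cpartials0 mulr0.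
Qed.

Lemma sol_tr (B : 'M[R]_r) (D : pdo R r) (u : pt -> C) g :
  (forall t, List.In t D -> forall x, t.1 (x + g) = t.1 x) ->
  classical_solution D u -> classical_solution D (tr g u).
Proof.
move=> hper [hu eu]; split; first exact: isCk_tr.
move=> x; rewrite -(eu (x + g)) /pdo_apply.
elim: D hper {eu hu} => [|t D IH] hper; first by rewrite !big_nil.
rewrite !big_cons IH; last by move=> t' h; apply: hper; right.
by rewrite cpartials_tr /tr (hper t (or_introl erefl)).
Qed.

End An2.


Section Poly.
Variables (R : realType) (r : nat).
Notation pt := 'rV[R]_r.
Notation C := (complex.complex R).
Notation RC := (real_complex R).

Definition cc N (g : pt) (al be : {ffun 'I_r -> 'I_N.+1}) : R :=
  \prod_i (if (be i <= al i)%N then ('C(al i, be i))%:R * (g 0 i) ^+ (al i - be i) else 0).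

Lemma monoD N (al : {ffun 'I_r -> 'I_N.+1}) (x g : pt) :
  monomial al (x + g) = \sum_be cc g al be * monomial be x.
Proof.
rewrite /monomial.
transitivity (\prod_i \sum_(j < N.+1) ((if (j <= al i)%N then
     ('C(al i, j))%:R * (g 0 i) ^+ (al i - j) else 0) * x 0 i ^+ j)).
  apply: eq_bigr => i _; rewrite mxE addrC exprDn.
  rewrite (big_ord_widen N.+1 (fun j => g 0 i ^+ (al i - j) * x 0 i ^+ j *+ 'C(al i, j)) (ltn_ord (al i))).
  rewrite big_mkcond; apply: eq_bigr => j _; rewrite ltnS; case: ifP => _.
    by rewrite -mulr_natl; ring.
  by rewrite mul0r.
rewrite bigA_distr_bigA; apply: eq_bigr => be _; rewrite /cc -big_split /=.
apply: eq_bigr => i _; by [].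
Qed.

Lemma cc_diag N g (al : {ffun 'I_r -> 'I_N.+1}) : cc g al al = 1.
Proof. by rewrite /cc big1 // => i _; rewrite leqnn binn subnn expr0 mulr1. Qed.

Lemma cc_le N g (al be : {ffun 'I_r -> 'I_N.+1}) : cc g al be != 0 -> forall i, (be i <= al i)%N.
Proof.
move=> h i; apply/negPn/negP => hn; move: h.
by rewrite /cc (bigD1 i) //= (negbTE hn) mul0r eqxx.
Qed.

Lemma mdeg_lt N (al be : {ffun 'I_r -> 'I_N.+1}) :
  (forall i, (be i <= al i)%N) -> be != al -> (mdeg be < mdeg al)%N.
Proof.
move=> hle hne.
have [i hi] : exists i, be i != al i.
  apply: contrapT => hn; move/eqP: hne; apply; apply/ffunP => i.
  by apply/eqP; apply: contrapT => h; apply: hn; exists i; apply/negP.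
rewrite /mdeg (bigD1 i) //= [X in (_ < X)%N](bigD1 i) //=.
have h1 : (be i < al i)%N by rewrite ltn_neqAle hi hle.
have h2 : (\sum_(j < r | j != i) (be j : nat) <= \sum_(j < r | j != i) (al j : nat))%N.
  by apply: leq_sum => j _; apply: hle.
by rewrite -addSn; apply: leq_add.
Qed.

End Poly.


Section Main.
Variables (R : realType) (r : nat) (B : 'M[R]_r).
Notation pt := 'rV[R]_r.
Notation C := (complex.complex R).
Notation RC := (real_complex R).

Definition good (f : pt -> C) := ccontinuous f /\ lattice_periodic B f.

Lemma good0 : good (fun _ => 0).
Proof. by split => //; split; apply: cst_continuous. Qed.

Lemma good_lc a f g : good f -> good g -> good (lc a f g).
Proof.
move=> [cf pf] [cg pg]; split; first exact: ccont_lc.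
by move=> k x; rewrite /lc pf pg.
Qed.

Lemma good_scale a f : good f -> good (fun x => a * f x).
Proof.
move=> gf; have := good_lc a gf good0.
by have -> : lc a f (fun _ => 0) = (fun x => a * f x) by apply/funext => x; rewrite /lc addr0.
Qed.

Lemma good_sum (I : Type) (s : seq I) (P : pred I) (F : I -> pt -> C) :
  (forall i, good (F i)) -> good (fun x => \sum_(i <- s | P i) F i x).
Proof.
move=> hF; rewrite -fct_sumE; apply: (big_ind good) => //.
- exact: good0.
- move=> f g gf gg; have := good_lc 1 gf gg.
  by have -> : lc 1 f g = f + g by apply/funext => x; rewrite /lc mul1r.
Qed.

Definition Q (D : pdo R r) N m : set (pt -> C) := fun p =>
  classical_solution D p /\ exists f : {ffun 'I_r -> 'I_N.+1} -> pt -> C,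
    (forall al, good (f al)) /\
    p = fun x => \sum_(al | (mdeg al < m)%N) f al x * RC (monomial al x).

Definition dl (g : pt) (u : pt -> C) : pt -> C := fun x => u (x + g) - u x.

Lemma fE (a : C) (u v : pt -> C) y : (a *: u + v) y = a * u y + v y.
Proof. by []. Qed.

Lemma linmap_dl g : linmap (F:=C) (V:=pt -> C) (dl g).
Proof. by move=> a u v; apply/funext => x; rewrite /dl !fE; ring. Qed.

Lemma subspace_Q D N m : lsubspace (F:=C) (V:=pt -> C) (Q D N m).
Proof.
split.
  split; first exact: sol0.
  exists (fun _ _ => 0); split; first by move=> _; exact: good0.
  by apply/funext => x; rewrite big1 // => al _; rewrite mul0r.
move=> a u v [su [f [gf eu]]] [sv [f' [gf' ev]]].
have -> : a *: u + v = lc a u v by apply/funext => x; rewrite fE.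
split; first exact: (sol_lc a su sv).
exists (fun al => lc a (f al) (f' al)); split.
  by move=> al; apply: good_lc.
rewrite eu ev; apply/funext => x; rewrite /lc mulr_sumr -big_split /=.
by apply: eq_bigr => al _; ring.
Qed.

Lemma dl_Q (D : pdo R r)
  (hcoef : forall a s, List.In (a, s) D -> ccontinuous a /\ lattice_periodic B a)
  N m k p : Q D N m.+1 p -> Q D N m (dl (lattice_elt B k) p).
Proof.
set g := lattice_elt B k.
move=> [solp [f [gf ep]]].
split.
  have -> : dl g p = lc (-1) p (tr g p) by apply/funext => x; rewrite /dl /lc /tr; ring.
  apply: sol_lc => //; apply: sol_tr => //.
  by case=> a s /hcoef [_ pa] x; apply: pa.
exists (fun be x => \sum_(al | (mdeg al < m.+1)%N && (al != be)) RC (cc g al be) * f al x).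
split.
  move=> be; apply: good_sum => al; apply: good_scale; exact: gf.
apply/funext => x; rewrite /dl ep.
have hp : forall al, f al (x + g) = f al x by move=> al; exact: (gf al).2 k x.
under eq_bigr => al _ do rewrite hp monoD rmorph_sum mulr_sumr.
rewrite -sumrB.
transitivity (\sum_(al | (mdeg al < m.+1)%N) \sum_be
    (if be != al then f al x * RC (cc g al be) * RC (monomial be x) else 0)).
  apply: eq_bigr => al _.
  rewrite (bigD1 al) //= cc_diag mul1r addrAC subrr add0r.
  rewrite [LHS]big_mkcond /=.
  apply: eq_bigr => be _; case: ifP => // _; rewrite rmorphM; ring.
rewrite exchange_big /= [RHS]big_mkcond /=; apply: eq_bigr => be _.
case: ifP => hbe.
  rewrite mulr_suml big_mkcondr /=; apply: eq_bigr => al _.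
  rewrite eq_sym; case: ifP => // _; ring.
apply: big1 => al hal; case: ifP => // hne.
have [c0|cn0] := eqVneq (cc g al be) 0; first by rewrite c0 rmorph0 mulr0 mul0r.
exfalso; have := mdeg_lt (cc_le cn0) hne; move: hal hbe; lia.
Qed.

End Main.


Section Fin.
Variables (R : realType) (r : nat) (B : 'M[R]_r).
Notation pt := 'rV[R]_r.
Notation C := (complex.complex R).

Lemma per_int (u : pt -> C) (g : pt) : (forall y, u (y + g) = u y) ->
  forall (z : int) y, u (y + g *~ z) = u y.
Proof.
move=> hg.
have hp : forall n y, u (y + g *+ n) = u y.
  elim => [|n IH] y; first by rewrite mulr0n addr0.
  by rewrite mulrSr addrA hg IH.
case=> n y; first by rewrite -pmulrn hp.
rewrite NegzE mulrNz -pmulrn.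
by rewrite -{2}[y](subrK (g *+ n.+1)) hp.
Qed.

Lemma lattice_sum (k : 'rV[int]_r) :
  lattice_elt B k = \sum_j row j B *~ k 0 j.
Proof.
rewrite /lattice_elt mulmx_sum_row; apply: eq_bigr => j _.
by rewrite mxE scaler_int.
Qed.

Lemma kernel_per (u : pt -> C) :
  (forall j : 'I_r, forall y, u (y + row j B) = u y) -> lattice_periodic B u.
Proof.
move=> H k x; rewrite lattice_sum.
elim: (index_enum _) x => [|j s IH] x; first by rewrite big_nil addr0.
by rewrite big_cons (addrC (row j B *~ _)) addrA per_int // IH.
Qed.

Lemma lat_row (j : 'I_r) : row j B = lattice_elt B (delta_mx 0 j).
Proof.
rewrite rowE /lattice_elt; congr (_ *m _); apply/matrixP => a b.
by rewrite !mxE; case: (_ && _).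
Qed.

Lemma lat0 : (0 : pt) = lattice_elt B 0.
Proof.
rewrite /lattice_elt; have -> : map_mx (fun z : int => (z%:~R : R)) (0 : 'rV[int]_r) = 0.
  by apply/matrixP => a b; rewrite !mxE.
by rewrite mul0mx.
Qed.

Lemma sum_eval (s : seq (pt -> C)) (c : nat -> C) x :
  (\sum_(i < size s) c i *: s`_i) x = \sum_(i < size s) c i * s`_i x.
Proof. by rewrite fct_sumE. Qed.

End Fin.

End Helpers.
Import Helpers.
Import numFieldNormedType.Exports.

Theorem corollary3p5 (R : realType) (r : nat) (B : 'M[R]_r)
  (hB : B \in unitmx) (D : pdo R r)
  (hcoef : forall a s, List.In (a, s) D -> ccontinuous a /\ lattice_periodic B a)
  (hfin : finite_dim (per_sol_space B D)) :
  forall n : nat, finite_dim (PnG B D n).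
Proof.
move=> n.
have [s0 hs0] : exists s0 : seq ('rV[R]_r -> complex R),
    forall u, per_sol_space B D u -> inspan (F:=complex R) s0 u.
  have [N [b hb]] := hfin.
  exists (mkseq (fun i => oapp b 0 (insub i)) N) => u /hb [c ->].
  exists (fun i => oapp c 0 (insub i)); apply/funext => x.
  rewrite fct_sumE; move: (size_mkseq (fun i => oapp b 0 (insub i)) N).
  set s := mkseq _ N => es.
  have -> : \sum_(i < size s) (oapp c 0 (insub (i : nat)) *: s`_i) x =
            \sum_(i < N) (oapp c 0 (insub (i : nat)) *: s`_i) x by rewrite es.
  apply: eq_bigr => i _; rewrite /s nth_mkseq // valK //.
pose Ls := fun j : nat => dl (oapp (fun j' : 'I_r => row j' B) 0 (insub j)).
have main : forall m, exists s, forall u, Q B D n m u -> inspan (F:=complex R) s u.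
  elim => [|m IH].
    exists [::] => u [_ [f [_ ->]]]; exists (fun _ => 0).
    rewrite big_ord0; apply/funext => x; by rewrite big1.
  have [s hs] := IH.
  apply: (fd_steps (Ls := Ls) (s0 := s0) (k := r) (subspace_Q B D n m.+1)).
    move=> j hj; split; first exact: linmap_dl.
    exists s => u hu; apply: hs; rewrite /Ls.
    case: insubP => [j' _ _|_] /=.
      by rewrite lat_row; apply: dl_Q.
    by rewrite (lat0 B); apply: dl_Q.
  move=> u hu hk; apply: hs0; split; first exact: hu.1.
  apply: kernel_per => j y.
  have := hk j (ltn_ord j); rewrite /Ls valK /= => /(congr1 (fun f => f y)).
  by rewrite /dl => /eqP; rewrite subr_eq0 => /eqP.
have [s hs] := main n.+1.
have hP : forall u, PnG B D n u -> inspan (F:=complex R) s u.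
  move=> u [su [f [gf eu]]]; apply: hs; split => //; exists f; split => //.
exists (size s), (fun j => s`_j) => u /hP [c ->].
exists (fun j => c j); apply/funext => x; exact: sum_eval.
Qed.
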